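(* Let $\varPhi\subset\mathbb{E}^3$ be a skew ruled surface with invariants $\delta,\kappa,\lambda$, right normalized with support function $q=\frac{f(u)+g(u)v}{w}$, neither $f$ nor $g$ the zero function, and let $\overline{T}$ be its Tchebychev vector field. Then: (a) $\overline{T}$ is tangential to the $\widetilde{K}$-curves of $\varPhi$ if and only if $\varPhi$ is conoidal with constant distribution parameter $\delta=c_1\neq0$, $g$ is a nonvanishing constant $c_2$, and $f=c_1c_2\int\lambda\,\mathrm{d}u+c_3$, $c_3\in\mathbb{R}$; (b) $\overline{T}$ is orthogonal to the $\widetilde{K}$-curves of $\varPhi$ if and only if $\varPhi$ is an Edlinger surface and $g$ and $f$ are nonvanishing constants $c_1$ and $c_2$, respectively.
   Context: $\varPhi$ is a ruled $C^r$-surface ($r\ge3$) with nonvanishing Gaussian curvature, in standard parameters $\overline{x}(u,v)=\overline{s}(u)+v\,\overline{e}(u)$, $|\overline{e}|=|\overline{e}'|=1$, $\langle\overline{s}',\overline{e}'\rangle=0$. Frame $\overline{n}=\overline{e}'$, $\overline{z}=\overline{e}\times\overline{n}$. Invariants: distribution parameter $\delta=(\overline{s}',\overline{e},\overline{e}')\neq0$, conical curvature $\kappa=(\overline{e},\overline{e}',\overline{e}'')$, $\lambda=\cot\sphericalangle(\overline{e},\overline{s}')$, $\overline{s}'=\delta\lambda\overline{e}+\delta\overline{z}$. Conoidal means $\kappa\equiv0$. An Edlinger surface is a ruled surface whose osculating quadrics are rotational hyperboloids, characterized by $\delta'=\kappa\lambda+1=0$. $w=\sqrt{\delta^2+v^2}$,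 $\overline{\xi}=(\delta\overline{n}-v\overline{z})/w$, Gaussian curvature $\widetilde{K}=-\delta^2/w^4$. The $\widetilde{K}$-curves are the curves along which $\widetilde{K}$ is constant, i.e. curves $v=v(u)$ with $2\delta vv'+\delta'(\delta^2-v^2)=0$. $h_{11}=-(\kappa w^2+\delta'v-\delta^2\lambda)/w$, $h_{12}=\delta/w$, $h_{22}=0$. A relative normalization is determined by its support function $q=\langle\overline{\xi},\overline{y}\rangle\neq0$; right normalization: $q=(f+gv)/w$, $f,g$ functions of $u$. Relative metric $G_{ij}=q^{-1}h_{ij}$, Darboux tensor $A_{ijk}=q^{-1}\langle\overline{\xi},\nabla^G_k\nabla^G_j\overline{x}_{/i}\rangle$, Tchebychev vector $\overline{T}=T^m\overline{x}_{/m}$, $T^m=\frac12A_i^{\ im}$; equivalently $T^1=\frac{w^2q_{/2}+vq}{\delta w}$, $T^2=\frac{2\delta w^2q_{/1}+\delta'q(\delta^2-v^2)}{2\delta^2w}+\frac{T^1(\kappa w^2+\delta'v-\delta^2\lambda)}{\delta}$. ''Tangential/orthogonal to a family of curves'' means at every point $\overline{T}$ is parallel/orthogonal to the tangent of the curve of the family through that point. $\int\cdots\mathrm{d}u$ denotes an antiderivative. *)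

(* Defs.v *)
From Stdlib Require Import Reals.
From Coquelicot Require Import Coquelicot.
Open Scope R_scope.

Definition vec : Type := (R * R * R)%type.
Definition mkv (x y z : R) : vec := (x, y, z).
Definition vx (a : vec) : R := fst (fst a).
Definition vy (a : vec) : R := snd (fst a).
Definition vz (a : vec) : R := snd a.
Definition vadd (a b : vec) : vec := mkv (vx a + vx b) (vy a + vy b) (vz a + vz b).
Definition vscal (k : R) (a : vec) : vec := mkv (k * vx a) (k * vy a) (k * vz a).
Definition vzero : vec := mkv 0 0 0.
Definition dot (a b : vec) : R := vx a * vx b + vy a * vy b + vz a * vz b.
Definition cross (a b : vec) : vec :=
  mkv (vy a * vz b - vz a * vy b) (vz a * vx b - vx a * vz b) (vx a * vy b - vy a * vx b).
Definition vnorm (a : vec) : R := sqrt (dot a a).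
Definition triple (a b c : vec) : R := dot a (cross b c).

Definition vderiv (c : R -> vec) (u : R) : vec :=
  mkv (Derive (fun t => vx (c t)) u) (Derive (fun t => vy (c t)) u) (Derive (fun t => vz (c t)) u).

Definition C3_on (a b : R) (h : R -> R) : Prop :=
  forall u, a < u < b ->
    (forall k, (k <= 3)%nat -> ex_derive_n h k u) /\ continuous (Derive_n h 3) u.
Definition vC3_on (a b : R) (c : R -> vec) : Prop :=
  C3_on a b (fun t => vx (c t)) /\ C3_on a b (fun t => vy (c t)) /\ C3_on a b (fun t => vz (c t)).

(* ---------- invariants of x(u,v) = s(u) + v e(u) ---------- *)
Definition delta (s e : R -> vec) (u : R) : R := triple (vderiv s u) (e u) (vderiv e u).
Definition kappa (e : R -> vec) (u : R) : R := triple (e u) (vderiv e u) (vderiv (vderiv e) u).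
(* lambda is defined by s' = delta*lambda*e + delta*z, i.e. <s',e> = delta*lambda *)
Definition lambda (s e : R -> vec) (u : R) : R := dot (vderiv s u) (e u) / delta s e u.
Definition ddelta (s e : R -> vec) (u : R) : R := Derive (delta s e) u.
Definition wfun (s e : R -> vec) (u v : R) : R := sqrt ((delta s e u) ^ 2 + v ^ 2).

(* A skew ruled C^3 surface in standard parameters over (a,b) x (c,d),
   with nonvanishing distribution parameter (hence K = -delta^2/w^4 <> 0). *)
Definition standard_ruled (a b : R) (s e : R -> vec) : Prop :=
  vC3_on a b s /\ vC3_on a b e /\
  forall u, a < u < b ->
    vnorm (e u) = 1 /\ vnorm (vderiv e u) = 1 /\
    dot (vderiv s u) (vderiv e u) = 0 /\ delta s e u <> 0.

Definition x_u (s e : R -> vec) (u v : R) : vec := vadd (vderiv s u) (vscal v (vderiv e u)).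
Definition x_v (e : R -> vec) (u : R) : vec := e u.

Definition q_right (s e : R -> vec) (f g : R -> R) (u v : R) : R :=
  (f u + g u * v) / wfun s e u v.

Definition q_1 (s e : R -> vec) (f g : R -> R) (u v : R) : R :=
  Derive (fun t => q_right s e f g t v) u.
Definition q_2 (s e : R -> vec) (f g : R -> R) (u v : R) : R :=
  Derive (fun t => q_right s e f g u t) v.

Definition T1 (s e : R -> vec) (f g : R -> R) (u v : R) : R :=
  let w := wfun s e u v in let d := delta s e u in
  (w ^ 2 * q_2 s e f g u v + v * q_right s e f g u v) / (d * w).

Definition T2 (s e : R -> vec) (f g : R -> R) (u v : R) : R :=
  let w := wfun s e u v in let d := delta s e u in let d' := ddelta s e u in
  (2 * d * w ^ 2 * q_1 s e f g u v + d' * q_right s e f g u v * (d ^ 2 - v ^ 2)) / (2 * d ^ 2 * w)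
  + T1 s e f g u v * (kappa e u * w ^ 2 + d' * v - d ^ 2 * lambda s e u) / d.

Definition Tvec (s e : R -> vec) (f g : R -> R) (u v : R) : vec :=
  vadd (vscal (T1 s e f g u v) (x_u s e u v)) (vscal (T2 s e f g u v) (x_v e u)).

Definition is_Kcurve (a b c d : R) (s e : R -> vec) (phi : R -> R) (al be : R) : Prop :=
  a <= al /\ al < be /\ be <= b /\
  forall u, al < u < be ->
    c < phi u < d /\ ex_derive phi u /\
    2 * delta s e u * phi u * Derive phi u
      + ddelta s e u * ((delta s e u) ^ 2 - (phi u) ^ 2) = 0.

Definition Kcurve_tangent (s e : R -> vec) (phi : R -> R) (u : R) : vec :=
  vadd (x_u s e u (phi u)) (vscal (Derive phi u) (x_v e u)).

Definition T_tangential_to_Kcurves (a b c d : R) (s e : R -> vec) (f g : R -> R) : Prop :=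
  forall phi al be, is_Kcurve a b c d s e phi al be ->
    forall u, al < u < be ->
      cross (Tvec s e f g u (phi u)) (Kcurve_tangent s e phi u) = vzero.

Definition T_orthogonal_to_Kcurves (a b c d : R) (s e : R -> vec) (f g : R -> R) : Prop :=
  forall phi al be, is_Kcurve a b c d s e phi al be ->
    forall u, al < u < be ->
      dot (Tvec s e f g u (phi u)) (Kcurve_tangent s e phi u) = 0.

Definition is_conoidal (a b : R) (e : R -> vec) : Prop :=
  forall u, a < u < b -> kappa e u = 0.

(* Edlinger surfaces, via their characterization delta' = kappa*lambda + 1 = 0 *)
Definition is_Edlinger (a b : R) (s e : R -> vec) : Prop :=
  forall u, a < u < b -> ddelta s e u = 0 /\ kappa e u * lambda s e u + 1 = 0.

(* Main.v *)
Require Import Defs.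
From Stdlib Require Import Reals Lra Lia.
From Coquelicot Require Import Coquelicot.
Open Scope R_scope.

Lemma locally_interval a b u : a < u < b -> locally u (fun t => a < t < b).
Proof.
intros H. apply (open_and (fun t => a < t) (fun t => t < b)); [apply open_gt|apply open_lt|exact H].
Qed.

Lemma C3_facts a b h u : C3_on a b h -> a < u < b -> ex_derive h u /\ ex_derive (Derive h) u.
Proof.
intros H Hu. destruct (H u Hu) as [H1 _]. split.
- exact (H1 1%nat ltac:(lia)).
- exact (H1 2%nat ltac:(lia)).
Qed.

Lemma const_interval a b (h : R -> R) : (forall t, a < t < b -> is_derive h t 0) ->
  forall x y, a < x < b -> a < y < b -> h x = h y.
Proof.
intros H x y Hx Hy.
destruct (Rtotal_order x y) as [Hxy|[Hxy|Hxy]].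
- apply (eq_is_derive h x y); [|lra]. intros t Ht. apply H; lra.
- subst; reflexivity.
- symmetry. apply (eq_is_derive h y x); [|lra]. intros t Ht. apply H; lra.
Qed.

Lemma locconst_derive a b (h : R -> R) (C : R) u : (forall t, a < t < b -> h t = C) -> a < u < b -> is_derive h u 0.
Proof.
intros H Hu. apply is_derive_ext_loc with (fun _ => C).
- generalize (locally_interval a b u Hu). apply filter_imp. intros t Ht. symmetry; auto.
- auto_derive; auto.
Qed.

Lemma loc_derive a b (h k : R -> R) (l : R) u : (forall t, a < t < b -> h t = k t) -> a < u < b -> is_derive k u l ->
  is_derive h u l.
Proof.
intros H Hu Hk. apply is_derive_ext_loc with k; auto.
generalize (locally_interval a b u Hu). apply filter_imp. intros t Ht. symmetry; auto.
Qed.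

Lemma sum_sq_const a b (h1 h2 h3 : R -> R) u :
  a < u < b -> (forall t, a < t < b -> h1 t * h1 t + h2 t * h2 t + h3 t * h3 t = 1) ->
  ex_derive h1 u -> ex_derive h2 u -> ex_derive h3 u ->
  h1 u * Derive h1 u + h2 u * Derive h2 u + h3 u * Derive h3 u = 0.
Proof.
intros Hu H E1 E2 E3.
assert (D1 : is_derive (fun t => h1 t * h1 t + h2 t * h2 t + h3 t * h3 t) u
   (2 * (h1 u * Derive h1 u + h2 u * Derive h2 u + h3 u * Derive h3 u))).
{ auto_derive; [repeat split; auto|]. set (X1 := Derive h1 u); set (X2 := Derive h2 u); set (X3 := Derive h3 u). ring. }
assert (D2 : is_derive (fun t => h1 t * h1 t + h2 t * h2 t + h3 t * h3 t) u 0).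
{ apply (locconst_derive a b _ 1 u); auto. }
apply is_derive_unique in D1. apply is_derive_unique in D2. lra.
Qed.

Lemma norm1_dot (x : vec) : vnorm x = 1 -> dot x x = 1.
Proof.
unfold vnorm. intros H. assert (0 <= dot x x).
{ unfold dot. nra. }
rewrite <- (sqrt_sqrt (dot x x)) by auto. rewrite H. ring.
Qed.

Section Frame.
Variables (a b : R) (s e : R -> vec).
Hypothesis HS : standard_ruled a b s e.

Lemma e_ex u : a < u < b -> ex_derive (fun t => vx (e t)) u /\ ex_derive (fun t => vy (e t)) u
  /\ ex_derive (fun t => vz (e t)) u /\
  ex_derive (Derive (fun t => vx (e t))) u /\ ex_derive (Derive (fun t => vy (e t))) u
  /\ ex_derive (Derive (fun t => vz (e t))) u.
Proof.
intros Hu. destruct HS as [_ [[E1 [E2 E3]] _]].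
destruct (C3_facts _ _ _ u E1 Hu); destruct (C3_facts _ _ _ u E2 Hu); destruct (C3_facts _ _ _ u E3 Hu).
tauto.
Qed.

Lemma s_ex u : a < u < b -> ex_derive (fun t => vx (s t)) u /\ ex_derive (fun t => vy (s t)) u
  /\ ex_derive (fun t => vz (s t)) u /\
  ex_derive (Derive (fun t => vx (s t))) u /\ ex_derive (Derive (fun t => vy (s t))) u
  /\ ex_derive (Derive (fun t => vz (s t))) u.
Proof.
intros Hu. destruct HS as [[E1 [E2 E3]] _].
destruct (C3_facts _ _ _ u E1 Hu); destruct (C3_facts _ _ _ u E2 Hu); destruct (C3_facts _ _ _ u E3 Hu).
tauto.
Qed.

Lemma delta_ex u : a < u < b -> ex_derive (delta s e) u.
Proof.
intros Hu. destruct (e_ex u Hu) as [A1 [A2 [A3 [A4 [A5 A6]]]]].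
destruct (s_ex u Hu) as [B1 [B2 [B3 [B4 [B5 B6]]]]].
set (S1 := Derive (fun t => vx (s t))) in *.
set (S2 := Derive (fun t => vy (s t))) in *.
set (S3 := Derive (fun t => vz (s t))) in *.
set (E1 := fun t => vx (e t)) in *.
set (E2 := fun t => vy (e t)) in *.
set (E3 := fun t => vz (e t)) in *.
set (F1 := Derive E1) in *.
set (F2 := Derive E2) in *.
set (F3 := Derive E3) in *.
apply ex_derive_ext with (fun t => S1 t * (E2 t * F3 t - E3 t * F2 t) + S2 t * (E3 t * F1 t - E1 t * F3 t)
   + S3 t * (E1 t * F2 t - E2 t * F1 t)).
{ intros t. reflexivity. }
auto_derive. repeat split; assumption.
Qed.

Lemma delta_is u : a < u < b -> is_derive (delta s e) u (ddelta s e u).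
Proof. intros Hu. unfold ddelta. apply Derive_correct, delta_ex; auto. Qed.

Lemma delta_nz u : a < u < b -> delta s e u <> 0.
Proof. intros Hu. destruct HS as [_ [_ H]]. apply H; auto. Qed.

Lemma ee u : a < u < b -> dot (e u) (e u) = 1.
Proof. intros Hu. destruct HS as [_ [_ H]]. apply norm1_dot. apply H; auto. Qed.

Lemma e'e' u : a < u < b -> dot (vderiv e u) (vderiv e u) = 1.
Proof. intros Hu. destruct HS as [_ [_ H]]. apply norm1_dot. apply H; auto. Qed.

Lemma s'e' u : a < u < b -> dot (vderiv s u) (vderiv e u) = 0.
Proof. intros Hu. destruct HS as [_ [_ H]]. apply H; auto. Qed.

Lemma e'e u : a < u < b -> dot (vderiv e u) (e u) = 0.
Proof.
intros Hu. destruct (e_ex u Hu) as [A1 [A2 [A3 _]]].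
generalize (sum_sq_const a b (fun t => vx (e t)) (fun t => vy (e t)) (fun t => vz (e t)) u Hu
  (fun t Ht => ee t Ht) A1 A2 A3).
unfold dot, vderiv, mkv, vx, vy, vz; simpl. intros H; rewrite <- H; ring.
Qed.

End Frame.

Lemma phi_const a b c d s e phi al be : standard_ruled a b s e -> is_Kcurve a b c d s e phi al be ->
  (forall u, al < u < be -> ddelta s e u = 0) -> forall u, al < u < be -> Derive phi u = 0.
Proof.
intros HS [Hal [Halbe [Hbe HK]]] Hp u Hu.
assert (Hprod : forall t, al < t < be -> phi t * Derive phi t = 0).
{ intros t Ht. destruct (HK t Ht) as [_ [_ E]]. rewrite Hp in E by auto.
  assert (Dn : delta s e t <> 0) by (apply (delta_nz a b); auto; lra).
  assert (E2 : (2 * delta s e t) * (phi t * Derive phi t) = 0) by (rewrite <- E; ring).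
  apply Rmult_integral in E2. destruct E2; auto. lra. }
destruct (Req_dec (phi u) 0) as [H0|H0].
- assert (Hpsi : forall t, al < t < be -> phi t * phi t = phi u * phi u).
  { intros t Ht. apply (const_interval al be (fun t => phi t * phi t)); auto.
    intros x Hx. destruct (HK x Hx) as [_ [Ex _]].
    assert (HD := Hprod x Hx).
    auto_derive; auto. set (X := Derive phi x) in *. transitivity (2 * (phi x * X)); [ring| rewrite HD; ring]. }
  assert (Hz : forall t, al < t < be -> phi t = 0).
  { intros t Ht. specialize (Hpsi t Ht). rewrite H0 in Hpsi. nra. }
  apply is_derive_unique. apply (locconst_derive al be phi 0 u); auto.
- specialize (Hprod u Hu). apply Rmult_integral in Hprod. destruct Hprod; auto. lra.
Qed.

Lemma Kcurve_exists a b c d s e u0 v0 : standard_ruled a b s e -> a < u0 < b -> c < v0 < d -> v0 <> 0 ->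
  exists phi al be, is_Kcurve a b c d s e phi al be /\ al < u0 < be /\ phi u0 = v0.
Proof.
intros HS Hu0 Hv0 Hv0n.
set (D0 := delta s e u0).
assert (HD0 : D0 <> 0) by (apply (delta_nz a b); auto).
set (K := (D0^2 + v0^2) / D0).
set (sg := v0 / Rabs v0).
assert (Habs : Rabs v0 <> 0) by (apply Rabs_no_R0; auto).
assert (Hsg : sg * sg = 1).
{ unfold sg. replace (v0 / Rabs v0 * (v0 / Rabs v0)) with (v0^2 / (Rabs v0)^2) by (field; auto).
  rewrite pow2_abs. field. auto. }
set (phi := fun t => sg * sqrt (delta s e t * (K - delta s e t))).
assert (Hpsi0 : delta s e u0 * (K - delta s e u0) = v0^2).
{ fold D0. unfold K. field. auto. }
assert (Hphi0 : phi u0 = v0).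
{ unfold phi. rewrite Hpsi0. replace (v0^2) with (Rsqr v0) by (unfold Rsqr; ring).
  rewrite sqrt_Rsqr_abs. unfold sg. field. auto. }
assert (Hder : forall t, a < t < b -> 0 < delta s e t * (K - delta s e t) ->
   ex_derive phi t /\
   2 * delta s e t * phi t * Derive phi t + ddelta s e t * (delta s e t ^ 2 - phi t ^ 2) = 0).
{ intros t Ht Hpos.
  assert (Ed := delta_ex a b s e HS t Ht).
  assert (IS : is_derive phi t (sg * ((ddelta s e t * (K - delta s e t) - delta s e t * ddelta s e t)
        / (2 * sqrt (delta s e t * (K - delta s e t)))))).
  { unfold phi, ddelta. auto_derive.
    - repeat split; auto.
    - change (K + - delta s e t) with (K - delta s e t).
      assert (0 < sqrt (delta s e t * (K - delta s e t))) by (apply sqrt_lt_R0; auto).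
      set (S := sqrt (delta s e t * (K - delta s e t))) in *.
      set (p := Derive (delta s e) t). field. lra. }
  split; [eexists; eauto|].
  rewrite (is_derive_unique _ _ _ IS). unfold phi.
  assert (0 < sqrt (delta s e t * (K - delta s e t))) by (apply sqrt_lt_R0; auto).
  assert (HS2 : sqrt (delta s e t * (K - delta s e t)) ^ 2 = delta s e t * (K - delta s e t))
    by (apply pow2_sqrt; lra).
  set (S := sqrt (delta s e t * (K - delta s e t))) in *.
  set (p := ddelta s e t). set (Dt := delta s e t) in *.
  transitivity ((sg * sg) * Dt * (p * (K - Dt) - Dt * p) + p * (Dt ^ 2 - (sg * sg) * S^2)).
  { field. lra. }
  rewrite Hsg, HS2. ring. }
assert (Hpsi0p : 0 < delta s e u0 * (K - delta s e u0)) by (rewrite Hpsi0; apply pow2_gt_0; auto).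
assert (Hcont : continuity_pt phi u0).
{ assert (Ex : ex_derive phi u0) by (apply Hder; auto).
  apply continuity_pt_filterlim. exact (ex_derive_continuous phi u0 Ex). }
set (r := Rmin (Rmin (v0 - c) (d - v0)) (Rabs v0)).
assert (Hr : 0 < r).
{ unfold r. apply Rmin_glb_lt; [apply Rmin_glb_lt; lra|]. apply Rabs_pos_lt; auto. }
destruct (Hcont r Hr) as [alp [Halp Hc]].
assert (Hc' : forall t, Rabs (t - u0) < alp -> Rabs (phi t - v0) < r).
{ intros t Ht. destruct (Req_dec t u0) as [->|Hne].
  - rewrite Hphi0. replace (v0 - v0) with 0 by ring. rewrite Rabs_R0. auto.
  - rewrite <- Hphi0. apply (Hc t). split; [split; [exact I|auto]|]. exact Ht. }
set (eps := Rmin alp (Rmin (u0 - a) (b - u0))).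
assert (Heps : 0 < eps) by (unfold eps; repeat apply Rmin_glb_lt; lra).
assert (He1 : eps <= alp) by apply Rmin_l.
assert (He2 : eps <= u0 - a) by (unfold eps; eapply Rle_trans; [apply Rmin_r|apply Rmin_l]).
assert (He3 : eps <= b - u0) by (unfold eps; eapply Rle_trans; [apply Rmin_r|apply Rmin_r]).
assert (Hr1 : r <= v0 - c) by (unfold r; eapply Rle_trans; [apply Rmin_l|apply Rmin_l]).
assert (Hr2 : r <= d - v0) by (unfold r; eapply Rle_trans; [apply Rmin_l|apply Rmin_r]).
assert (Hr3 : r <= Rabs v0) by (unfold r; apply Rmin_r).
exists phi, (u0 - eps), (u0 + eps).
split; [|split; [lra|auto]].
split; [lra|split; [lra|split; [lra|]]].
intros t Ht.
assert (Ht' : Rabs (t - u0) < alp) by (apply Rabs_def1; lra).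
specialize (Hc' t Ht'). apply Rabs_def2 in Hc'.
assert (Hab : a < t < b) by lra.
assert (Hnz : phi t <> 0).
{ intro H0. rewrite H0 in Hc'. destruct (Rle_dec 0 v0).
  - rewrite Rabs_right in Hr3 by lra. lra.
  - rewrite Rabs_left in Hr3 by lra. lra. }
assert (Hpos : 0 < delta s e t * (K - delta s e t)).
{ destruct (Rlt_dec 0 (delta s e t * (K - delta s e t))) as [|Hn]; auto.
  exfalso. apply Hnz. unfold phi. rewrite sqrt_neg_0 by lra. ring. }
destruct (Hder t Hab Hpos) as [E1 E2].
split; [lra|split; auto].
Qed.

Lemma cross_decomp (A B : R) (x y : vec) (P : R) :
  cross (vadd (vscal A x) (vscal B y)) (vadd x (vscal P y)) = vscal (A * P - B) (cross x y).
Proof.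
destruct x as [[x1 x2] x3]; destruct y as [[y1 y2] y3].
unfold cross, vadd, vscal, mkv, vx, vy, vz; simpl. f_equal; [f_equal|]; ring.
Qed.

Lemma dot_decomp (A B : R) (x y : vec) (P : R) :
  dot (vadd (vscal A x) (vscal B y)) (vadd x (vscal P y)) =
  A * dot x x + (A * P + B) * dot x y + B * P * dot y y.
Proof.
destruct x as [[x1 x2] x3]; destruct y as [[y1 y2] y3].
unfold dot, vadd, vscal, mkv, vx, vy, vz; simpl. ring.
Qed.

Lemma dot_e'_cross (s' e e' : vec) (v P : R) :
  dot e' (vscal P (cross (vadd s' (vscal v e')) e)) = P * triple s' e e'.
Proof.
destruct s' as [[x1 x2] x3]; destruct e as [[y1 y2] y3]; destruct e' as [[z1 z2] z3].
unfold triple, dot, cross, vadd, vscal, mkv, vx, vy, vz; simpl. ring.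
Qed.

Lemma vscal0 x : vscal 0 x = vzero.
Proof. destruct x as [[x1 x2] x3]. unfold vscal, vzero, mkv; simpl. f_equal; [f_equal|]; ring. Qed.

Lemma gram (s a b : vec) :
  triple s a b ^ 2 = dot s s * (dot a a * dot b b - dot a b ^ 2)
   - dot s a * (dot s a * dot b b - dot a b * dot s b)
   + dot s b * (dot s a * dot a b - dot a a * dot s b).
Proof.
destruct s as [[x1 x2] x3]; destruct a as [[y1 y2] y3]; destruct b as [[z1 z2] z3].
unfold triple, dot, cross, mkv, vx, vy, vz; simpl. ring.
Qed.

Lemma xu_dots (s' e e' : vec) v :
  dot (vadd s' (vscal v e')) (vadd s' (vscal v e')) = dot s' s' + 2 * v * dot s' e' + v^2 * dot e' e' /\
  dot (vadd s' (vscal v e')) e = dot s' e + v * dot e' e.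
Proof.
destruct s' as [[x1 x2] x3]; destruct e as [[y1 y2] y3]; destruct e' as [[z1 z2] z3].
unfold dot, vadd, vscal, mkv, vx, vy, vz; simpl. split; ring.
Qed.

Lemma factor_zero x y A B C : x <> y -> A - B = (x - y) * C -> A = 0 -> B = 0 -> C = 0.
Proof.
intros H E HA HB. rewrite HA, HB in E. destruct (Rmult_integral (x - y) C) as [h|h]; try lra.
Qed.

Lemma quartic_zero a4 a3 a2 a1 a0 x1 x2 x3 x4 x5 :
  x1 <> x2 -> x1 <> x3 -> x1 <> x4 -> x1 <> x5 -> x2 <> x3 -> x2 <> x4 -> x2 <> x5 ->
  x3 <> x4 -> x3 <> x5 -> x4 <> x5 ->
  (forall x, x = x1 \/ x = x2 \/ x = x3 \/ x = x4 \/ x = x5 ->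
     a4 * x^4 + a3 * x^3 + a2 * x^2 + a1 * x + a0 = 0) ->
  a4 = 0 /\ a3 = 0 /\ a2 = 0 /\ a1 = 0 /\ a0 = 0.
Proof.
intros h12 h13 h14 h15 h23 h24 h25 h34 h35 h45 HP.
pose (P x := a4 * x^4 + a3 * x^3 + a2 * x^2 + a1 * x + a0).
pose (Q x y := a4*(x^3+x^2*y+x*y^2+y^3)+a3*(x^2+x*y+y^2)+a2*(x+y)+a1).
pose (Rr x y z := a4*(x^2+y^2+z^2+x*y+x*z+y*z)+a3*(x+y+z)+a2).
pose (S x y z w := a4*(x+y+z+w)+a3).
assert (P1 : P x1 = 0) by (apply HP; tauto).
assert (P2 : P x2 = 0) by (apply HP; tauto).
assert (P3 : P x3 = 0) by (apply HP; tauto).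
assert (P4 : P x4 = 0) by (apply HP; tauto).
assert (P5 : P x5 = 0) by (apply HP; tauto).
assert (Q12 : Q x1 x2 = 0) by (apply (factor_zero x1 x2 (P x1) (P x2)); auto; unfold P, Q; ring).
assert (Q13 : Q x1 x3 = 0) by (apply (factor_zero x1 x3 (P x1) (P x3)); auto; unfold P, Q; ring).
assert (Q14 : Q x1 x4 = 0) by (apply (factor_zero x1 x4 (P x1) (P x4)); auto; unfold P, Q; ring).
assert (Q15 : Q x1 x5 = 0) by (apply (factor_zero x1 x5 (P x1) (P x5)); auto; unfold P, Q; ring).
assert (R3 : Rr x1 x2 x3 = 0) by (apply (factor_zero x2 x3 (Q x1 x2) (Q x1 x3)); auto; unfold Q, Rr; ring).
assert (R4 : Rr x1 x2 x4 = 0) by (apply (factor_zero x2 x4 (Q x1 x2) (Q x1 x4)); auto; unfold Q, Rr; ring).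
assert (R5 : Rr x1 x2 x5 = 0) by (apply (factor_zero x2 x5 (Q x1 x2) (Q x1 x5)); auto; unfold Q, Rr; ring).
assert (S4 : S x1 x2 x3 x4 = 0) by (apply (factor_zero x3 x4 (Rr x1 x2 x3) (Rr x1 x2 x4)); auto; unfold Rr, S; ring).
assert (S5 : S x1 x2 x3 x5 = 0) by (apply (factor_zero x3 x5 (Rr x1 x2 x3) (Rr x1 x2 x5)); auto; unfold Rr, S; ring).
assert (A4 : a4 = 0) by (apply (factor_zero x4 x5 (S x1 x2 x3 x4) (S x1 x2 x3 x5)); auto; unfold S; ring).
assert (A3 : a3 = 0) by (unfold S in S4; rewrite A4 in S4; lra).
assert (A2 : a2 = 0) by (unfold Rr in R3; rewrite A4, A3 in R3; lra).
assert (A1 : a1 = 0) by (unfold Q in Q12; rewrite A4, A3, A2 in Q12; lra).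
unfold P in P1; rewrite A4, A3, A2, A1 in P1. repeat split; auto; lra.
Qed.

Lemma five_points c d : c < d -> exists x1 x2 x3 x4 x5,
  x1 <> x2 /\ x1 <> x3 /\ x1 <> x4 /\ x1 <> x5 /\ x2 <> x3 /\ x2 <> x4 /\ x2 <> x5 /\
  x3 <> x4 /\ x3 <> x5 /\ x4 <> x5 /\
  forall x, x = x1 \/ x = x2 \/ x = x3 \/ x = x4 \/ x = x5 -> c < x < d /\ x <> 0.
Proof.
intros H.
destruct (Rle_dec d 0) as [Hd|Hd].
- exists (c + (d-c)/6), (c + 2*(d-c)/6), (c+3*(d-c)/6), (c+4*(d-c)/6), (c+5*(d-c)/6).
  do 10 (split; [intro; lra|]). intros y Hy; repeat destruct Hy as [Hy|Hy]; subst y; (split; [split|intro]); lra.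
- set (m := Rmax c 0). assert (m < d) by (unfold m; apply Rmax_lub_lt; lra).
  assert (c <= m) by apply Rmax_l. assert (0 <= m) by apply Rmax_r.
  exists (m + (d-m)/6), (m + 2*(d-m)/6), (m+3*(d-m)/6), (m+4*(d-m)/6), (m+5*(d-m)/6).
  do 10 (split; [intro; lra|]). intros y Hy; repeat destruct Hy as [Hy|Hy]; subst y; (split; [split|intro]); lra.
Qed.

Lemma pos_w D v : D <> 0 -> 0 < D ^ 2 + v ^ 2.
Proof. intros H. assert (0 < D^2) by (apply pow2_gt_0; auto). nra. Qed.

Lemma q2_eq s e f g u v : delta s e u <> 0 ->
  q_2 s e f g u v = g u / wfun s e u v - (f u + g u * v) * v / (wfun s e u v) ^ 3.
Proof.
intros HD. unfold q_2, q_right, wfun.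
set (D := delta s e u) in *.
apply is_derive_unique. auto_derive.
- split; [|split; auto]. replace (D * (D * 1) + v * (v * 1)) with (D^2+v^2) by ring. apply pos_w; auto.
  replace (D * (D * 1) + v * (v * 1)) with (D^2+v^2) by ring.
  apply Rgt_not_eq, sqrt_lt_R0, pos_w; auto.
- replace (D * (D * 1) + v * (v * 1)) with (D^2+v^2) by ring.
  assert (0 < sqrt (D^2+v^2)) by (apply sqrt_lt_R0, pos_w; auto).
  set (W := sqrt (D^2+v^2)) in *. field. lra.
Qed.

Lemma q1_eq s e f g u v : delta s e u <> 0 -> ex_derive f u -> ex_derive g u -> ex_derive (delta s e) u ->
  q_1 s e f g u v = (Derive f u + Derive g u * v) / wfun s e u v
     - (f u + g u * v) * delta s e u * ddelta s e u / (wfun s e u v) ^ 3.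
Proof.
intros HD Ef Eg Ed. unfold q_1, q_right, wfun, ddelta.
apply is_derive_unique. auto_derive.
- split; [auto|split; [auto|split; [auto|split]]]; auto.
  replace (delta s e u * (delta s e u * 1) + v * (v * 1)) with (delta s e u^2+v^2) by ring. apply pos_w; auto.
  split; auto.
  replace (delta s e u * (delta s e u * 1) + v * (v * 1)) with (delta s e u^2+v^2) by ring.
  apply Rgt_not_eq, sqrt_lt_R0, pos_w; auto.
- replace (delta s e u * (delta s e u * 1) + v * (v * 1)) with (delta s e u^2+v^2) by ring.
  assert (0 < sqrt (delta s e u^2+v^2)) by (apply sqrt_lt_R0, pos_w; auto).
  set (W := sqrt (delta s e u^2+v^2)) in *.
  set (F' := Derive f u). set (G' := Derive g u). set (p := Derive (delta s e) u).
  set (D := delta s e u) in *. field. lra.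
Qed.

Lemma T1_eq s e f g u v : delta s e u <> 0 -> T1 s e f g u v = g u / delta s e u.
Proof.
intros HD. unfold T1. cbv zeta. rewrite q2_eq by auto. unfold q_right.
assert (0 < wfun s e u v) by (apply sqrt_lt_R0, pos_w; auto).
set (W := wfun s e u v) in *. set (D := delta s e u) in *. field. lra.
Qed.

Lemma T2_eq s e f g u v : delta s e u <> 0 -> ex_derive f u -> ex_derive g u -> ex_derive (delta s e) u ->
  T2 s e f g u v =
   (2 * delta s e u * (Derive f u + Derive g u * v) - ddelta s e u * (f u + g u * v)) / (2 * delta s e u ^ 2)
   + g u * (kappa e u * (delta s e u ^ 2 + v ^ 2) + ddelta s e u * v - delta s e u ^ 2 * lambda s e u)
     / delta s e u ^ 2.
Proof.
intros HD Ef Eg Ed. unfold T2. cbv zeta. rewrite q1_eq by auto. rewrite T1_eq by auto. unfold q_right.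
assert (0 < wfun s e u v) by (apply sqrt_lt_R0, pos_w; auto).
assert (HW : wfun s e u v ^ 2 = delta s e u ^ 2 + v ^ 2).
{ unfold wfun. rewrite pow2_sqrt; [ring|]. pose proof (pos_w _ v HD); lra. }
replace (delta s e u ^ 2 - v ^ 2) with (2 * delta s e u ^ 2 - wfun s e u v ^ 2) by (rewrite HW; ring).
rewrite <- HW.
set (W := wfun s e u v) in *. set (D := delta s e u) in *.
set (F' := Derive f u). set (G' := Derive g u). set (p := ddelta s e u).
field. lra.
Qed.
Definition T2e D p k l F G F' G' v := (2 * D * (F' + G' * v) - p * (F + G * v)) / (2 * D ^ 2)
   + G * (k * (D ^ 2 + v ^ 2) + p * v - D ^ 2 * l) / D ^ 2.
Lemma tang_poly D p k l F G F' G' v : D <> 0 -> v <> 0 ->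
  2 * D^2 * v * (G / D * (p * (v^2 - D^2) / (2 * D * v)) - T2e D p k l F G F' G' v) =
  -(2*G*k*v^3 + 2*D*G'*v^2 + (2*D*F' - p*F + 2*G*k*D^2 - 2*G*D^2*l)*v + G*p*D^2).
Proof. intros. unfold T2e. field. auto. Qed.
Lemma orth_poly D p k l F G F' G' v : D <> 0 -> v <> 0 ->
  let T2 := T2e D p k l F G F' G' v in let P := p * (v^2 - D^2) / (2 * D * v) in
  let a2 := 2*G*k in let a1 := 2*D*G' + G*p in let a0 := 2*D*F' - p*F + 2*G*k*D^2 - 2*G*D^2*l in
  4 * D^3 * v * (G/D * (D^2*l^2 + D^2 + v^2) + (G/D * P + T2) * (D * l) + T2 * P) =
  a2*p * v^4 + (4*D^2*G + a1*p + 2*D^2*l*a2) * v^3 + (2*D^2*G*l*p + a0*p + 2*D^2*l*a1 - a2*p*D^2) * v^2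
  + (4*D^2*G*(D^2*l^2+D^2) + 2*D^2*l*a0 - a1*p*D^2) * v + (-2*D^4*G*l*p - a0*p*D^2).
Proof. intros. unfold T2, P, a2, a1, a0, T2e. field. auto. Qed.
Lemma orth_deduce D p k l F G F' G' : D <> 0 -> G <> 0 ->
  let a2 := 2*G*k in let a1 := 2*D*G' + G*p in let a0 := 2*D*F' - p*F + 2*G*k*D^2 - 2*G*D^2*l in
  a2*p = 0 -> (4*D^2*G + a1*p + 2*D^2*l*a2) = 0 -> (2*D^2*G*l*p + a0*p + 2*D^2*l*a1 - a2*p*D^2) = 0 ->
  (4*D^2*G*(D^2*l^2+D^2) + 2*D^2*l*a0 - a1*p*D^2) = 0 -> (-2*D^4*G*l*p - a0*p*D^2) = 0 ->
  p = 0 /\ k * l + 1 = 0 /\ G' = 0 /\ F' = 0.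
Proof.
intros HD HG a2 a1 a0 c4 c3 c2 c1 c0.
assert (HD2 : D^2 <> 0) by (apply pow_nonzero; auto).
assert (Hp : p = 0).
{ destruct (Req_dec p 0) as [|Hp]; auto. exfalso.
  assert (Hk : k = 0).
  { unfold a2 in c4. assert (E : (2*G*p) * k = 0) by (rewrite <- c4; ring).
    apply Rmult_integral in E. destruct E as [E|]; auto.
    exfalso. apply Rmult_integral in E. destruct E as [E|E]; [|auto].
    apply Rmult_integral in E; destruct E; lra. }
  assert (Ha0 : a0 = -2*D^2*G*l).
  { assert (E : (-(p*D^2)) * (a0 + 2*D^2*G*l) = 0) by (rewrite <- c0; ring).
    apply Rmult_integral in E. destruct E as [E|E]; [|lra].
    exfalso. assert (p * D^2 = 0) by lra. apply Rmult_integral in H; destruct H; auto. }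
  assert (Ha1 : a1 * p = 4 * D^2 * G).
  { rewrite Ha0 in c1. apply Rmult_eq_reg_l with (D^2); auto.
    replace (D^2 * (a1*p)) with (a1*p*D^2) by ring. rewrite <- (Rplus_0_l (a1 * p * D^2)), <- c1. ring. }
  unfold a2 in c3. rewrite Hk, Ha1 in c3.
  assert (E : (8 * G) * D^2 = 0) by (rewrite <- c3; ring).
  apply Rmult_integral in E. destruct E as [E|E]; [apply HG; lra|auto]. }
subst p.
assert (Hkl : k * l + 1 = 0).
{ unfold a1, a2 in c3. assert (E : (4*D^2*G) * (k*l+1) = 0) by (rewrite <- c3; ring).
  apply Rmult_integral in E. destruct E as [E|E]; auto. exfalso.
  apply Rmult_integral in E. destruct E as [E|E]; auto.
  apply Rmult_integral in E. destruct E as [E|E]; auto. lra. }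
assert (Hl : l <> 0) by (intro; subst l; lra).
assert (HG' : G' = 0).
{ unfold a1, a2 in c2. assert (E : (4 * D^2 * D * l) * G' = 0) by (rewrite <- c2; ring).
  apply Rmult_integral in E. destruct E as [E|E]; auto. exfalso.
  repeat (apply Rmult_integral in E; destruct E as [E|E]); auto; try lra. }
split; auto. split; auto. split; auto.
unfold a0, a1 in c1. 
assert (E : (4 * D^3 * l) * F' + 4 * D^4 * G * (k*l + 1) = 0) by (rewrite <- c1; ring).
rewrite Hkl in E.
assert (E2 : (4 * D^3 * l) * F' = 0) by (rewrite <- E; ring).
apply Rmult_integral in E2. destruct E2 as [E2|E2]; auto. exfalso.
assert (D^3 <> 0) by (apply pow_nonzero; auto).
repeat (apply Rmult_integral in E2; destruct E2 as [E2|E2]); auto; lra.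
Qed.

Lemma dot_comm x y : dot x y = dot y x.
Proof. unfold dot. ring. Qed.

Lemma tang_iff a b s e f g u v P : standard_ruled a b s e -> a < u < b ->
  cross (Tvec s e f g u v) (vadd (x_u s e u v) (vscal P (x_v e u))) = vzero <->
  T1 s e f g u v * P - T2 s e f g u v = 0.
Proof.
intros HS Hu. unfold Tvec, x_v. rewrite cross_decomp. split.
- intros H. apply (f_equal (dot (vderiv e u))) in H. unfold x_u in H. rewrite dot_e'_cross in H.
  change (triple (vderiv s u) (e u) (vderiv e u)) with (delta s e u) in H.
  assert (Hz : dot (vderiv e u) vzero = 0) by (unfold dot, vzero, mkv, vx, vy, vz; simpl; ring).
  rewrite Hz in H. apply Rmult_integral in H. destruct H as [H|H]; auto.
  exfalso. exact (delta_nz a b s e HS u Hu H).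
- intros H. rewrite H, vscal0. reflexivity.
Qed.

Lemma orth_eq a b s e f g u v P : standard_ruled a b s e -> a < u < b ->
  dot (Tvec s e f g u v) (vadd (x_u s e u v) (vscal P (x_v e u))) =
  T1 s e f g u v * (delta s e u ^ 2 * lambda s e u ^ 2 + delta s e u ^ 2 + v ^ 2)
  + (T1 s e f g u v * P + T2 s e f g u v) * (delta s e u * lambda s e u) + T2 s e f g u v * P.
Proof.
intros HS Hu. unfold Tvec, x_v. rewrite dot_decomp. unfold x_u.
destruct (xu_dots (vderiv s u) (e u) (vderiv e u) v) as [X1 X2]. rewrite X1, X2.
assert (HD := delta_nz a b s e HS u Hu).
assert (Hee := ee a b s e HS u Hu).
assert (He'e' := e'e' a b s e HS u Hu).
assert (Hs'e' := s'e' a b s e HS u Hu).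
assert (He'e := e'e a b s e HS u Hu).
assert (Hs'e : dot (vderiv s u) (e u) = delta s e u * lambda s e u) by (unfold lambda; field; auto).
assert (G := gram (vderiv s u) (e u) (vderiv e u)).
change (triple (vderiv s u) (e u) (vderiv e u)) with (delta s e u) in G.
rewrite (dot_comm (e u) (vderiv e u)), He'e, Hee, He'e', Hs'e', Hs'e in G.
assert (Hss : dot (vderiv s u) (vderiv s u) = delta s e u ^ 2 * lambda s e u ^ 2 + delta s e u ^ 2)
  by (ring_simplify in G; nra).
rewrite Hss, Hs'e', He'e', He'e, Hs'e, Hee. ring.
Qed.

Lemma tang_imp D p k l F G F' G' v : D <> 0 -> v <> 0 ->
  G / D * (p * (v^2 - D^2) / (2 * D * v)) - T2e D p k l F G F' G' v = 0 ->
  0 * v^4 + (2*G*k) * v^3 + (2*D*G') * v^2 + (2*D*F' - p*F + 2*G*k*D^2 - 2*G*D^2*l) * v + G*p*D^2 = 0.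
Proof.
intros HD Hv H. assert (E := tang_poly D p k l F G F' G' v HD Hv). rewrite H in E. lra.
Qed.

Lemma orth_imp D p k l F G F' G' v : D <> 0 -> v <> 0 ->
  let T2 := T2e D p k l F G F' G' v in let P := p * (v^2 - D^2) / (2 * D * v) in
  G/D * (D^2*l^2 + D^2 + v^2) + (G/D * P + T2) * (D * l) + T2 * P = 0 ->
  let a2 := 2*G*k in let a1 := 2*D*G' + G*p in let a0 := 2*D*F' - p*F + 2*G*k*D^2 - 2*G*D^2*l in
  a2*p * v^4 + (4*D^2*G + a1*p + 2*D^2*l*a2) * v^3 + (2*D^2*G*l*p + a0*p + 2*D^2*l*a1 - a2*p*D^2) * v^2
  + (4*D^2*G*(D^2*l^2+D^2) + 2*D^2*l*a0 - a1*p*D^2) * v + (-2*D^4*G*l*p - a0*p*D^2) = 0.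
Proof.
intros HD Hv T2 P H a2 a1 a0. assert (E := orth_poly D p k l F G F' G' v HD Hv). cbv zeta in E.
unfold a2, a1, a0. rewrite <- E. unfold T2, P in H. rewrite H. ring.
Qed.

Lemma Kpoint a b c d s e u v : standard_ruled a b s e -> a < u < b -> c < v < d -> v <> 0 ->
  exists phi al be, is_Kcurve a b c d s e phi al be /\ al < u < be /\ phi u = v /\
    Derive phi u = ddelta s e u * (v^2 - delta s e u ^ 2) / (2 * delta s e u * v).
Proof.
intros HS Hu Hv Hv0. destruct (Kcurve_exists a b c d s e u v HS Hu Hv Hv0) as [phi [al [be [HK [Hin Hphi]]]]].
exists phi, al, be. split; auto. split; auto. split; auto.
destruct HK as [_ [_ [_ HK]]]. destruct (HK u Hin) as [_ [_ E]]. rewrite Hphi in E.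
assert (HD := delta_nz a b s e HS u Hu).
set (D := delta s e u) in *. set (p := ddelta s e u) in *.
assert (E2 : Derive phi u * (2 * D * v) = p * (v^2 - D^2)) by lra.
rewrite <- E2. field. split; auto.
Qed.

Lemma coeffs_a a b c d s e f g u : c < d -> standard_ruled a b s e ->
  (forall u, a < u < b -> ex_derive f u /\ ex_derive g u) ->
  T_tangential_to_Kcurves a b c d s e f g -> a < u < b ->
  let D := delta s e u in let p := ddelta s e u in let k := kappa e u in let l := lambda s e u in
  let F := f u in let G := g u in let F' := Derive f u in let G' := Derive g u in
  2*G*k = 0 /\ 2*D*G' = 0 /\ 2*D*F' - p*F + 2*G*k*D^2 - 2*G*D^2*l = 0 /\ G*p*D^2 = 0.
Proof.
intros Hcd HS Hfg Tang Hu D p k l F G F' G'.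
destruct (Hfg u Hu) as [Ef Eg].
assert (HD := delta_nz a b s e HS u Hu). assert (Ed := delta_ex a b s e HS u Hu).
destruct (five_points c d Hcd) as [x1 [x2 [x3 [x4 [x5 [h12 [h13 [h14 [h15 [h23 [h24 [h25 [h34 [h35 [h45 Hx]]]]]]]]]]]]]]].
assert (Hpoly : forall x, x = x1 \/ x = x2 \/ x = x3 \/ x = x4 \/ x = x5 ->
  0 * x^4 + (2*G*k) * x^3 + (2*D*G') * x^2 + (2*D*F' - p*F + 2*G*k*D^2 - 2*G*D^2*l) * x + G*p*D^2 = 0).
{ intros x Hxx. destruct (Hx x Hxx) as [Hxcd Hx0].
  destruct (Kpoint a b c d s e u x HS Hu Hxcd Hx0) as [phi [al [be [HK [Hin [Hphi HP]]]]]].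
  specialize (Tang phi al be HK u Hin). unfold Kcurve_tangent in Tang. rewrite Hphi in Tang.
  apply tang_iff with (a := a) (b := b) in Tang; auto. rewrite HP in Tang.
  rewrite T1_eq, T2_eq in Tang; auto.
  apply tang_imp; try exact Tang; auto. }
destruct (quartic_zero _ _ _ _ _ x1 x2 x3 x4 x5 h12 h13 h14 h15 h23 h24 h25 h34 h35 h45 Hpoly)
  as [_ [A3 [A2 [A1 A0]]]]. tauto.
Qed.

Lemma coeffs_b a b c d s e f g u : c < d -> standard_ruled a b s e ->
  (forall u, a < u < b -> ex_derive f u /\ ex_derive g u) ->
  T_orthogonal_to_Kcurves a b c d s e f g -> a < u < b -> g u <> 0 ->
  ddelta s e u = 0 /\ kappa e u * lambda s e u + 1 = 0 /\ Derive g u = 0 /\ Derive f u = 0.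
Proof.
intros Hcd HS Hfg Orth Hu HG.
destruct (Hfg u Hu) as [Ef Eg].
assert (HD := delta_nz a b s e HS u Hu). assert (Ed := delta_ex a b s e HS u Hu).
set (D := delta s e u) in *. set (p := ddelta s e u). set (k := kappa e u). set (l := lambda s e u).
set (F := f u). set (G := g u) in *. set (F' := Derive f u). set (G' := Derive g u).
destruct (five_points c d Hcd) as [x1 [x2 [x3 [x4 [x5 [h12 [h13 [h14 [h15 [h23 [h24 [h25 [h34 [h35 [h45 Hx]]]]]]]]]]]]]]].
set (a2 := 2*G*k). set (a1 := 2*D*G' + G*p). set (a0 := 2*D*F' - p*F + 2*G*k*D^2 - 2*G*D^2*l).
assert (Hpoly : forall x, x = x1 \/ x = x2 \/ x = x3 \/ x = x4 \/ x = x5 ->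
  a2*p * x^4 + (4*D^2*G + a1*p + 2*D^2*l*a2) * x^3 + (2*D^2*G*l*p + a0*p + 2*D^2*l*a1 - a2*p*D^2) * x^2
  + (4*D^2*G*(D^2*l^2+D^2) + 2*D^2*l*a0 - a1*p*D^2) * x + (-2*D^4*G*l*p - a0*p*D^2) = 0).
{ intros x Hxx. destruct (Hx x Hxx) as [Hxcd Hx0].
  destruct (Kpoint a b c d s e u x HS Hu Hxcd Hx0) as [phi [al [be [HK [Hin [Hphi HP]]]]]].
  specialize (Orth phi al be HK u Hin). unfold Kcurve_tangent in Orth. rewrite Hphi in Orth.
  rewrite (orth_eq a b) in Orth; auto. rewrite HP in Orth.
  rewrite T1_eq, T2_eq in Orth; auto.
  apply (orth_imp D p k l F G F' G' x); try exact Orth; auto. }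
destruct (quartic_zero _ _ _ _ _ x1 x2 x3 x4 x5 h12 h13 h14 h15 h23 h24 h25 h34 h35 h45 Hpoly)
  as [A4 [A3 [A2 [A1 A0]]]].
apply (orth_deduce D p k l F G F' G'); auto.
Qed.

Lemma deriv0_const a b (h : R -> R) : (forall u, a < u < b -> ex_derive h u /\ Derive h u = 0) ->
  forall x y, a < x < b -> a < y < b -> h x = h y.
Proof.
intros H. apply const_interval. intros t Ht. destruct (H t Ht) as [E1 E2].
rewrite <- E2. apply Derive_correct; auto.
Qed.

Theorem proposition7 (a b c d : R) (s e : R -> vec) (f g : R -> R) :
  a < b -> c < d ->
  standard_ruled a b s e ->
  (forall u, a < u < b -> ex_derive f u /\ ex_derive g u) ->
  (exists u, a < u < b /\ f u <> 0) ->
  (exists u, a < u < b /\ g u <> 0) ->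
  (forall u v, a < u < b -> c < v < d -> q_right s e f g u v <> 0) ->
  (T_tangential_to_Kcurves a b c d s e f g <->
     (is_conoidal a b e /\
      exists (c1 c2 c3 : R) (L : R -> R), c1 <> 0 /\ c2 <> 0 /\
        forall u, a < u < b ->
          delta s e u = c1 /\ g u = c2 /\
          is_derive L u (lambda s e u) /\ f u = c1 * c2 * L u + c3))
  /\
  (T_orthogonal_to_Kcurves a b c d s e f g <->
     (is_Edlinger a b s e /\
      exists c1 c2 : R, c1 <> 0 /\ c2 <> 0 /\
        forall u, a < u < b -> g u = c1 /\ f u = c2)).
Proof.
intros Hab Hcd HS Hfg [uf [Huf Hfn]] [ug [Hug Hgn]] Hq.
split; split.
-
  intros Tang.
  assert (Hg : forall u, a < u < b -> g u = g ug).
  { intros u Hu. apply (deriv0_const a b g); auto. intros t Ht. split; [apply Hfg; auto|].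
    destruct (coeffs_a a b c d s e f g t Hcd HS Hfg Tang Ht) as [_ [E _]].
    assert (HD := delta_nz a b s e HS t Ht).
    apply Rmult_integral in E. destruct E as [E|E]; auto. lra. }
  assert (Hkp : forall u, a < u < b -> kappa e u = 0 /\ ddelta s e u = 0).
  { intros u Hu. destruct (coeffs_a a b c d s e f g u Hcd HS Hfg Tang Hu) as [E1 [_ [_ E4]]].
    cbv zeta in E1, E4. rewrite Hg in E1, E4 by auto.
    assert (HD := delta_nz a b s e HS u Hu).
    assert (HD2 : delta s e u ^ 2 <> 0) by (apply pow_nonzero; auto).
    split.
    - apply Rmult_integral in E1. destruct E1 as [E1|E1]; auto. exfalso. lra.
    - apply Rmult_integral in E4. destruct E4 as [E4|E4]; [|exfalso; auto].
      apply Rmult_integral in E4. destruct E4 as [E4|E4]; auto. exfalso; auto. }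
  assert (Hd : forall u, a < u < b -> delta s e u = delta s e ug).
  { intros u Hu. apply (deriv0_const a b (delta s e)); auto. intros t Ht. split.
    - apply (delta_ex a b); auto.
    - apply Hkp; auto. }
  split; [intros u Hu; apply Hkp; auto|].
  set (c1 := delta s e ug). set (c2 := g ug).
  assert (Hc1 : c1 <> 0) by (apply (delta_nz a b); auto).
  exists c1, c2, 0, (fun t => f t / (c1 * c2)).
  split; auto. split; auto. intros u Hu. split; [apply Hd; auto|]. split; [apply Hg; auto|]. split.
  + destruct (coeffs_a a b c d s e f g u Hcd HS Hfg Tang Hu) as [_ [_ [E3 _]]].
    cbv zeta in E3. destruct (Hkp u Hu) as [Hk Hp]. rewrite Hk, Hp, Hd, Hg in E3 by auto.
    fold c1 c2 in E3. destruct (Hfg u Hu) as [Ef _].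
    auto_derive; auto.
    set (F' := Derive f u) in *. field_simplify_eq; [|split; auto].
    apply Rmult_eq_reg_l with (2 * c1); [|lra].
    transitivity (2 * c1 * F'); [ring|]. 
    replace (2 * c1 * F') with (2 * c1 * F' - 0 * f u + 2 * c2 * 0 * c1 ^ 2 - 2 * c2 * c1 ^ 2 * lambda s e u + 2 * c2 * c1^2 * lambda s e u) by ring.
    rewrite E3. ring.
  + field. split; auto.
-
  intros [Hcon [c1 [c2 [c3 [L [Hc1 [Hc2 H]]]]]]] phi al be HK u Hu.
  destruct HK as [Hal [Halbe [Hbe HK']]].
  assert (Hu' : a < u < b) by lra.
  assert (Hp : forall t, a < t < b -> ddelta s e t = 0).
  { intros t Ht. unfold ddelta. apply is_derive_unique. apply (locconst_derive a b _ c1); auto.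
    intros x Hx; apply H; auto. }
  assert (HP : Derive phi u = 0).
  { apply (phi_const a b c d s e phi al be); auto. split; auto. intros t Ht; apply Hp; lra. }
  unfold Kcurve_tangent. apply tang_iff with (a := a) (b := b); auto. rewrite HP.
  destruct (Hfg u Hu') as [Ef Eg].
  assert (HD := delta_nz a b s e HS u Hu'). assert (Ed := delta_ex a b s e HS u Hu').
  rewrite T1_eq, T2_eq; auto.
  assert (HG' : Derive g u = 0).
  { apply is_derive_unique. apply (locconst_derive a b _ c2); auto. intros x Hx; apply H; auto. }
  assert (HF' : Derive f u = c1 * c2 * lambda s e u).
  { apply is_derive_unique. apply (loc_derive a b f (fun t => c1 * c2 * L t + c3)); auto.
    - intros x Hx; apply H; auto.
    - destruct (H u Hu') as [_ [_ [HL _]]].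
      assert (EL : ex_derive L u) by (eexists; eauto).
      auto_derive; auto.
      replace (Derive (fun x => L x) u) with (lambda s e u) by (symmetry; apply is_derive_unique; exact HL).
      ring. }
  rewrite HG', HF', Hp, Hcon by auto. destruct (H u Hu') as [-> [-> _]].
  field. auto.
-
  intros Orth.
  assert (Hpt := fun u Hu HG => coeffs_b a b c d s e f g u Hcd HS Hfg Orth Hu HG).
  assert (Hg2 : forall u, a < u < b -> g u * g u = g ug * g ug).
  { intros u Hu. apply (deriv0_const a b (fun t => g t * g t)); auto. intros t Ht.
    destruct (Hfg t Ht) as [_ Eg].
    assert (IS : is_derive (fun t => g t * g t) t (2 * g t * Derive g t)).
    { auto_derive; auto. set (X := Derive g t). ring. }
    split; [eexists; eauto|]. transitivity (2 * g t * Derive g t); [apply is_derive_unique; exact IS|].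
    destruct (Req_dec (g t) 0) as [E|E].
    - rewrite E; ring.
    - destruct (Hpt t Ht E) as [_ [_ [-> _]]]. ring. }
  assert (Hgn' : forall u, a < u < b -> g u <> 0).
  { intros u Hu E. specialize (Hg2 u Hu). rewrite E in Hg2.
    assert (g ug * g ug <> 0) by (apply Rmult_integral_contrapositive; auto). lra. }
  split.
  + intros u Hu. destruct (Hpt u Hu (Hgn' u Hu)) as [A [B _]]. auto.
  + exists (g ug), (f uf). split; auto. split; auto. intros u Hu. split.
    * apply (deriv0_const a b g); auto. intros t Ht. split; [apply Hfg; auto|].
      apply (Hpt t Ht (Hgn' t Ht)).
    * apply (deriv0_const a b f); auto. intros t Ht. split; [apply Hfg; auto|].
      apply (Hpt t Ht (Hgn' t Ht)).
-
  intros [HE [c1 [c2 [Hc1 [Hc2 H]]]]] phi al be HK u Hu.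
  destruct HK as [Hal [Halbe [Hbe HK']]].
  assert (Hu' : a < u < b) by lra.
  assert (HP : Derive phi u = 0).
  { apply (phi_const a b c d s e phi al be); auto. split; auto. intros t Ht; apply HE; lra. }
  unfold Kcurve_tangent. rewrite (orth_eq a b); auto. rewrite HP.
  destruct (Hfg u Hu') as [Ef Eg].
  assert (HD := delta_nz a b s e HS u Hu'). assert (Ed := delta_ex a b s e HS u Hu').
  rewrite T1_eq, T2_eq; auto.
  assert (HG' : Derive g u = 0).
  { apply is_derive_unique. apply (locconst_derive a b _ c1); auto. intros x Hx; apply H; auto. }
  assert (HF' : Derive f u = 0).
  { apply is_derive_unique. apply (locconst_derive a b _ c2); auto. intros x Hx; apply H; auto. }
  destruct (HE u Hu') as [Hp Hkl].
  rewrite HG', HF', Hp.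
  set (D := delta s e u) in *. set (k := kappa e u) in *. set (l := lambda s e u) in *.
  set (v := phi u). set (G := g u).
  transitivity (G / D * (k * l + 1) * (D^2 + v^2)); [field; auto|].
  rewrite Hkl. ring.
Qed.
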